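(* In the setting of the symmetric stochastic game with program $\mathcal P_{SS}(\lambda;\Pi)$, let $\underline z<\bar z$ with $-k_{SS}(-1;\Pi)<\underline z<\bar z<k_{SS}(+1;\Pi)$ and $Z=[\underline z,\bar z]$. Let $\epsilon_0>0$ and, for each $\lambda\in\{-1,+1\}$, let $(v^\lambda,x^\lambda)$ (together with some $(\alpha^\lambda_s)_s$) be feasible in $\mathcal P_{SS}(\lambda;\Pi)$ with $v^{-1}+\epsilon_0<z<v^{+1}-\epsilon_0$ for all $z\in Z$. Let $\kappa_0=\max\{\max_{\lambda,s,t,y}|x^\lambda_s(t,y)|,\ \max_{\lambda,z\in Z}|z-v^\lambda|\}$, let $n\in\mathbb N$ satisfy $\epsilon_0\frac{n-1}{2}-2\kappa_0|S|>0$, and let $\bar\delta<1$ be such that for all $\delta\ge\bar\delta$: $(n/2)^2(1-\delta)\le|S|$ and $1-\delta^{n-1}\ge(n-1)(1-\delta)/2$. Then for every $\lambda\in\{-1,+1\}$, every $z\in Z$ and every $\delta\ge\bar\delta$ there exists $w:H^n\to\mathbb R$ such that (1) for every $s\in S$, $z$ is an SSE payoff of the game $\Gamma^n(s,w;\delta)$, and (2) $\lambda w(h)<\lambda z$ for every $h\in H^n$.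
   Context: Setting: finite set of players $I$, finite state set $S$, common finite action set $B$, finite public signal set $Y$; $p(t,y\mid s,a)$ is the probability of next state $t$ and public signal $y$ given state $s$ and action profile $a$; $u(\alpha,s)$ is each player's payoff when all play $\alpha\in\Delta(B)$ at $s$. The program $\mathcal P_{SS}(\lambda;\Pi)$, $\lambda\in\{-1,+1\}$: maximize $\lambda v$ over $v\in\mathbb R$, $(\alpha_s)_s\in\Delta(B)^{|S|}$, $x=(x_s(t,y))$ subject to (a) $v=u(\alpha_s,s)+\sum_{(t,y)}x_s(t,y)p(t,y\mid s,\alpha_s)$ for all $s$; (b) $v\ge u_i((b,\alpha_{s,-i}),s)+\sum_{(t,y)}x_s(t,y)p(t,y\mid s,(b,\alpha_{s,-i}))$ for all $s,i$ and $b\in B$; (c) $\lambda\sum_{s\in T}x_s(\xi(s),\psi(s))\le0$ for all $T\subseteq S$, permutations $\xi$ of $T$, and $\psi:T\to Y$; its value is $k_{SS}(\lambda;\Pi)$. $H^n$ is the set of public histories $h^n=(s^1,y^1,s^2,y^2,\dots,s^{n-1},y^{n-1},s^n)$ of length $n$. $\Gamma^n(s,w;\delta)$ is the $(n-1)$-stage game starting at state $s$ in which a player's payoff is $(1-\delta)\sum_{k=1}^{n-1}\delta^{k-1}u_i(a^k,s^k)+\delta^{n-1}w(h^n)$; an SSE of it is a strongly symmetric public-strategy equilibrium. *)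

(* Defs.v *)
From HB Require Import structures.
From mathcomp Require Import all_boot all_order all_algebra all_fingroup.
From mathcomp Require Import boolp classical_sets reals constructive_ereal ereal.
Set Implicit Arguments. Unset Strict Implicit. Unset Printing Implicit Defensive.
Import Order.TTheory GRing.Theory Num.Theory.
Local Open Scope ring_scope.

Section SymStochGame.
Variables (R : realType) (I S B Y : finType).
(* p s a t y = probability of next state t and public signal y given state s
   and pure action profile a *)
Variable p : S -> {ffun I -> B} -> S -> Y -> R.
Variable u : I -> {ffun I -> B} -> S -> R.

Definition transition_prob : Prop :=
  (forall s a t y, 0 <= p s a t y) /\
  (forall s a, \sum_(t : S) \sum_(y : Y) p s a t y = 1).

Definition symmetric_game : Prop :=
  forall (pi : {perm I}) (a : {ffun I -> B}) (s : S),
    (forall i, u i [ffun j => a (pi j)] s = u (pi i) a s) /\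
    (forall t y, p s [ffun j => a (pi j)] t y = p s a t y).

Definition is_mixed (al : {ffun B -> R}) : Prop :=
  (forall b, 0 <= al b) /\ \sum_(b : B) al b = 1.

Definition prof_prob (be : I -> {ffun B -> R}) (a : {ffun I -> B}) : R :=
  \prod_(i : I) be i (a i).
Definition exp_u (i : I) (be : I -> {ffun B -> R}) (s : S) : R :=
  \sum_(a : {ffun I -> B}) prof_prob be a * u i a s.
Definition exp_p (be : I -> {ffun B -> R}) (s t : S) (y : Y) : R :=
  \sum_(a : {ffun I -> B}) prof_prob be a * p s a t y.

Definition sym_prof (al : {ffun B -> R}) : I -> {ffun B -> R} := fun _ => al.
Definition pure (b : B) : {ffun B -> R} := [ffun b' => (b' == b)%:R].
Definition dev_prof (i : I) (b : B) (al : {ffun B -> R}) : I -> {ffun B -> R} :=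
  fun j => if j == i then pure b else al.

(* u(alpha, s): each player's payoff when all play alpha (well defined by
   symmetry; we read it off an arbitrary player) *)
Definition ucom (al : {ffun B -> R}) (s : S) : R :=
  if [pick i : I] is Some i then exp_u i (sym_prof al) s else 0.

Definition feasible (lam v : R) (al : S -> {ffun B -> R})
    (x : S -> S -> Y -> R) : Prop :=
  (forall s, is_mixed (al s)) /\
  (forall s, v = ucom (al s) s +
      \sum_(t : S) \sum_(y : Y) x s t y * exp_p (sym_prof (al s)) s t y) /\
  (forall s i b, v >= exp_u i (dev_prof i b (al s)) s +
      \sum_(t : S) \sum_(y : Y) x s t y * exp_p (dev_prof i b (al s)) s t y) /\
  (forall (T : {set S}) (xi : {perm S}) (psi : S -> Y), perm_on T xi ->
      lam * (\sum_(s in T) x s (xi s) (psi s)) <= 0).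

Definition kSS (lam : R) : \bar R :=
  ereal_sup [set (lam * v)%:E | v in
              [set v | exists al x, feasible lam v al x]].

(* public histories (s^1,y^1,...,s^{k-1},y^{k-1},s^k): the list of
   (state, signal) pairs together with the current state *)
Definition hist := (seq (S * Y) * S)%type.
Definition in_Hn (n : nat) (h : hist) : Prop := size h.1 = n.-1.

Definition pub_strat := hist -> {ffun B -> R}.
Definition valid_strat (sg : pub_strat) : Prop := forall h, is_mixed (sg h).

(* expected normalised payoff of player i from history h when m stages
   remain, under the profile be, with terminal payoff w and discount delta:
   (1-d) sum_k d^(k-1) u_i + d^m w *)
Fixpoint val (i : I) (be : I -> pub_strat) (w : hist -> R) (d : R)
    (m : nat) (h : hist) : R :=
  match m with
  | 0 => w h
  | m'.+1 =>
      (1 - d) * exp_u i (fun j => be j h) h.2 +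
      d * \sum_(t : S) \sum_(y : Y)
            exp_p (fun j => be j h) h.2 t y *
            val i be w d m' (rcons h.1 (h.2, y), t)
  end.

Definition dev_strat (i : I) (tau sg : pub_strat) : I -> pub_strat :=
  fun j => if j == i then tau else sg.

Definition payoffG (n : nat) (s : S) (w : hist -> R) (d : R)
    (i : I) (be : I -> pub_strat) : R :=
  val i be w d n.-1 ([::], s).

Definition is_SSE (n : nat) (s : S) (w : hist -> R) (d : R)
    (sg : pub_strat) : Prop :=
  valid_strat sg /\
  forall i (tau : pub_strat), valid_strat tau ->
    payoffG n s w d i (dev_strat i tau sg) <= payoffG n s w d i (fun _ => sg).

Definition SSE_payoff (n : nat) (s : S) (w : hist -> R) (d : R) (z : R) : Prop :=
  exists sg, is_SSE n s w d sg /\ forall i, payoffG n s w d i (fun _ => sg) = z.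

End SymStochGame.

Definition kappa0 {R : realType} {S Y : finType}
    (xm xp : S -> S -> Y -> R) (vm vp zl zh : R) : R :=
  Num.max
    (\big[Num.max/0]_(s : S) \big[Num.max/0]_(t : S) \big[Num.max/0]_(y : Y)
        Num.max `|xm s t y| `|xp s t y|)
    (Num.max (sup [set `|z - vm| | z in [set z | zl <= z <= zh]])
             (sup [set `|z - vp| | z in [set z | zl <= z <= zh]])).

(* Main.v *)
Require Import Defs.
From HB Require Import structures.
From mathcomp Require Import all_boot all_order all_algebra all_fingroup.
From mathcomp Require Import boolp classical_sets reals constructive_ereal ereal.
From mathcomp Require Import ring lra zify.
Import Order.TTheory GRing.Theory Num.Theory.
Local Open Scope ring_scope.
Fixpoint edges {S Y : Type} (l : seq (S * Y)) (e : S) : seq (S * S * Y) :=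
  match l with
  | [::] => [::]
  | q :: l' => (q.1, head e (map fst l'), q.2) :: edges l' e
  end.

Lemma size_edges {S Y : Type} (l : seq (S * Y)) e : size (edges l e) = size l.
Proof. by elim: l => //= q l ->. Qed.

Lemma edges_cat {S Y : Type} (l1 l2 : seq (S * Y)) e :
  edges (l1 ++ l2) e = edges l1 (head e (map fst l2)) ++ edges l2 e.
Proof.
elim: l1 => //= q l1 ->; congr (_ :: _).
by case: l1 => //=.
Qed.

Lemma edges_rcons {S Y : Type} (l : seq (S * Y)) s y t :
  edges (rcons l (s, y)) t = rcons (edges l s) (s, t, y).
Proof. by rewrite -cats1 edges_cat /= cats1. Qed.

Lemma nth_edges {S Y : Type} (l : seq (S * Y)) e q0 q1 i : (i < size l)%N ->
  nth q0 (edges l e) i = ((nth q1 l i).1, nth e (map fst l) i.+1, (nth q1 l i).2).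
Proof.
elim: l i => //= q l IH [|i] /=.
  by case: l {IH}.
by move=> Hi; rewrite IH.
Qed.

Lemma decomp {S Y : eqType} (l : seq (S * Y)) : ~~ uniq (map fst l) ->
  exists l1 s y c' y' l2', l = l1 ++ ((s, y) :: c') ++ ((s, y') :: l2') /\
    uniq (s :: map fst c').
Proof.
elim: l => //= q l IH.
rewrite negb_and negbK; case/orP=> [Hin|Hnu].
- case Hu: (uniq (map fst l)).
  + set i := index q.1 (map fst l).
    have Hi : (i < size l)%N by rewrite -(size_map fst) index_mem.
    exists [::], q.1, q.2, (take i l), (nth q l i).2, (drop i.+1 l); split.
      rewrite /=; congr (_ :: _); first by case: q {Hin Hu i Hi}.
      rewrite -{1}(cat_take_drop i l) (drop_nth q Hi); congr (_ ++ (_ :: _)).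
      have E : (nth q l i).1 = q.1.
        by rewrite -(nth_map q q.1 fst Hi) nth_index.
      by rewrite -E; case: (nth q l i).
    rewrite /= map_take take_uniq // andbT.
    by rewrite in_take // ltnn.
  + move: (IH (negbT Hu)) => [l1 [s [y [c' [y' [l2' [-> Hu']]]]]]].
    by exists (q :: l1), s, y, c', y', l2'.
- move: (IH Hnu) => [l1 [s [y [c' [y' [l2' [-> Hu']]]]]]].
  by exists (q :: l1), s, y, c', y', l2'.
Qed.

Lemma cycle_edges (R : realType) (S Y : finType) (a : S -> S -> Y -> R)
    (s : S) (y : Y) (c' : seq (S * Y)) :
  uniq (s :: map fst c') ->
  (forall (T : {set S}) (xi : {perm S}) (psi : S -> Y), perm_on T xi ->
      \sum_(t in T) a t (xi t) (psi t) <= 0) ->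
  \sum_(q <- edges ((s, y) :: c') s) a q.1.1 q.1.2 q.2 <= 0.
Proof.
move=> Hu H.
set c := (s, y) :: c'.
have Hu' : uniq (map fst c) by [].
pose xi := perm (can_inj (prev_next Hu')).
pose psi t := nth y (map snd c) (index t (map fst c)).
have Hon : perm_on [set t in map fst c] xi.
  rewrite /perm_on /=; apply/fintype.subsetP => t; rewrite !inE permE => Hne.
  apply: contraNT Hne => Hn; by rewrite next_nth /= inE (negbTE Hn) eqxx.
apply: le_trans (H _ xi psi Hon).
rewrite le_eqVlt; apply/orP; left; apply/eqP.
rewrite (eq_bigl (fun t => t \in map fst c)); last by move=> t; rewrite inE.
rewrite -big_uniq //.
rewrite (big_nth (s, s, y)) (big_nth s) size_edges size_map.
apply: eq_big_nat => i /andP [_ Hi].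
rewrite (nth_edges _ _ _ (s, y) _ Hi) /=.
have Ei : nth s (map fst c) i = (nth (s, y) c i).1 by rewrite (nth_map (s, y)).
rewrite -Ei permE /psi.
have Hm : nth s (map fst c) i \in map fst c by rewrite mem_nth // size_map.
rewrite next_nth Hm index_uniq //; last by rewrite /= size_map.
by rewrite /= (nth_map (s, y) y snd Hi).

Qed.

Lemma path_bound (R : realType) (S Y : finType) (a : S -> S -> Y -> R) (k : R) :
  0 <= k -> (forall s t y, a s t y <= k) ->
  (forall (T : {set S}) (xi : {perm S}) (psi : S -> Y), perm_on T xi ->
      \sum_(t in T) a t (xi t) (psi t) <= 0) ->
  forall l e, \sum_(q <- edges l e) a q.1.1 q.1.2 q.2 <= k * #|S|%:R.
Proof.
move=> Hk Ha Hc l e.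
move: {2}(size l) (leqnn (size l)) => N; elim: N l => [|N IH] l.
  by rewrite leqn0 => /nilP ->; rewrite big_nil mulr_ge0.
move=> HN.
case Hu: (uniq (map fst l)).
  apply: (@le_trans _ _ (\sum_(q <- edges l e) k)).
    by apply: ler_sum => q _; apply: Ha.
  rewrite big_const_seq count_predT size_edges iter_addr addr0 -[k *+ _]mulr_natr.
  rewrite ler_wpM2l // ler_nat.
  have := max_card (mem (map fst l)).
  by rewrite (card_uniqP Hu) size_map.
move: (decomp l (negbT Hu)) => [l1 [s [y [c' [y' [l2' [El Hu']]]]]]].
have Hcyc := @cycle_edges _ _ _ _ _ y _ Hu' Hc.
have Hsz : (size (l1 ++ (s, y') :: l2') <= N)%N.
  move: HN; rewrite El !size_cat [size (_ :: c')]/= [size (_ :: l2')]/=.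
  move: (size l1) (size c') (size l2') => a1 a2 a3; lia.
have := IH _ Hsz.
have E1 : edges (l1 ++ (s, y') :: l2') e = edges l1 s ++ edges ((s, y') :: l2') e.
  by rewrite edges_cat.
have E2 : edges (l1 ++ ((s, y) :: c') ++ (s, y') :: l2') e =
    edges l1 s ++ (edges ((s, y) :: c') s ++ edges ((s, y') :: l2') e).
  by rewrite !edges_cat.
have Hs : forall l1 l2 : seq (S * S * Y),
    \sum_(q <- l1 ++ l2) a q.1.1 q.1.2 q.2 =
    \sum_(q <- l1) a q.1.1 q.1.2 q.2 + \sum_(q <- l2) a q.1.1 q.1.2 q.2.
  by move=> ? ?; rewrite big_cat.
rewrite E1 Hs => H.
rewrite El E2 !Hs addrCA -[X in _ <= X]addr0.
by rewrite addrC lerD.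
Qed.

Fixpoint dsum {R : pzRingType} (d : R) (l : seq R) : R :=
  match l with [::] => 0 | a :: l' => a + d * dsum d l' end.

Lemma dsum_rcons {R : comPzRingType} (d : R) l a :
  dsum d (rcons l a) = dsum d l + d ^+ size l * a.
Proof.
elim: l => [|b l IH] /=; first by rewrite mulr0 addr0 expr0 mul1r add0r.
by rewrite IH mulrDr addrA exprS mulrA.
Qed.

Lemma dsum_scale {R : comPzRingType} {T : Type} (d c : R) (f : T -> R) l :
  dsum d [seq c * f q | q <- l] = c * dsum d [seq f q | q <- l].
Proof.
elim: l => [|q l IH] /=; first by rewrite mulr0.
by rewrite IH mulrDr mulrCA.
Qed.

Lemma dsum_geom {R : comPzRingType} (d : R) m :
  (1 - d) * dsum d (nseq m 1) = 1 - d ^+ m.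
Proof.
elim: m => [|m IH] /=; first by rewrite mulr0 expr0 subrr.
by rewrite mulrDr mulr1 mulrCA IH exprS; ring.
Qed.

Lemma dsum_le {R : realDomainType} (d : R) (l : seq R) (C : R) :
  0 <= d <= 1 -> (forall j, \sum_(x <- take j l) x <= C) -> dsum d l <= C.
Proof.
move=> /andP [d0 d1]; elim: l C => [|a l IH] C H /=.
  by have := H 0%N; rewrite take0 big_nil.
have Ha : a <= C by have := H 1%N; rewrite /= take0 big_cons big_nil addr0.
have Hl : dsum d l <= C - a.
  apply: IH => j; have := H j.+1; rewrite /= big_cons => Hj.
  by rewrite lerBrDl.
have : d * dsum d l <= d * (C - a) by rewrite ler_wpM2l.
nra.
Qed.

Lemma take_edges {S Y : Type} (l : seq (S * Y)) e j :
  take j (edges l e) = edges (take j l) (head e (map fst (drop j l))).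
Proof.
elim: l j => [|q l IH] [|j] //=.
rewrite IH; congr (_ :: _).
by case: l {IH} => [|q' l'] //; case: j.
Qed.

Lemma nseqSr {T : Type} m (x : T) : nseq m.+1 x = rcons (nseq m x) x.
Proof. by elim: m => //= m <-. Qed.

Section Game.
Variables (R : realType) (I S B Y : finType).
Variable p : S -> {ffun I -> B} -> S -> Y -> R.
Variable u : I -> {ffun I -> B} -> S -> R.
Hypothesis Hp : transition_prob p.
Hypothesis Hsym : symmetric_game p u.

Lemma prof_sum1 (be : I -> {ffun B -> R}) :
  (forall j, is_mixed (be j)) -> \sum_a prof_prob be a = 1.
Proof.
move=> H; rewrite /prof_prob -(bigA_distr_bigA (fun i b => be i b)) /=.
by rewrite big1 // => i _; case: (H i).
Qed.

Lemma prof_ge0 (be : I -> {ffun B -> R}) a :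
  (forall j, is_mixed (be j)) -> 0 <= prof_prob be a.
Proof. by move=> H; apply: prodr_ge0 => i _; case: (H i). Qed.

Lemma exp_p_ge0 (be : I -> {ffun B -> R}) s t y :
  (forall j, is_mixed (be j)) -> 0 <= exp_p p be s t y.
Proof.
move=> H; apply: sumr_ge0 => a _; apply: mulr_ge0; first exact: prof_ge0 be a H.
by case: Hp.
Qed.

Lemma exp_p_sum1 (be : I -> {ffun B -> R}) s :
  (forall j, is_mixed (be j)) -> \sum_t \sum_y exp_p p be s t y = 1.
Proof.
move=> H; rewrite /exp_p.
rewrite (eq_bigr (fun t => \sum_a \sum_y prof_prob be a * p s a t y)); last first.
  by move=> t _; rewrite exchange_big.
rewrite exchange_big /= -(prof_sum1 be H); apply: eq_bigr => a _.
rewrite (eq_bigr (fun t => prof_prob be a * \sum_y p s a t y)); last first.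
  by move=> t _; rewrite mulr_sumr.
case: Hp => _ Hs; by rewrite -mulr_sumr Hs mulr1.
Qed.

Lemma exp_u_sym i0 i al s :
  exp_u u i0 (sym_prof al) s = exp_u u i (sym_prof al) s.
Proof.
pose pi := tperm i i0.
pose h (a : {ffun I -> B}) : {ffun I -> B} := [ffun j => a (pi j)].
have hK : involutive h.
  by move=> a; apply/ffunP => j; rewrite !ffunE tpermK.
rewrite /exp_u (reindex_inj (inv_inj hK)).
apply: eq_bigr => a _; congr (_ * _).
  rewrite /prof_prob /sym_prof (reindex_inj (@perm_inj _ pi)) /=.
  by apply: eq_bigr => j _; rewrite ffunE tpermK.
rewrite /h; case: (Hsym pi a s) => -> _; by rewrite tpermR.
Qed.

Lemma ucom_exp al s i : ucom u al s = exp_u u i (sym_prof al) s.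
Proof.
rewrite /ucom; case: pickP => [i0 _|H]; first exact: exp_u_sym.
by have := H i.
Qed.


Lemma prof_mix i (be : I -> {ffun B -> R}) (bt al : {ffun B -> R}) a :
  (forall j, be j = if j == i then bt else al) ->
  prof_prob be a = \sum_b bt b * prof_prob (dev_prof i b al) a.
Proof.
move=> Hbe.
have E1 : \prod_(j | j != i) be j (a j) = \prod_(j | j != i) al (a j).
  by apply: eq_bigr => j /negbTE Hj; rewrite Hbe Hj.
have E2 : forall b, prof_prob (dev_prof i b al) a =
    pure R b (a i) * \prod_(j | j != i) al (a j).
  move=> b; rewrite /prof_prob (bigD1 i) //= /dev_prof eqxx; congr (_ * _).
  by apply: eq_bigr => j /negbTE Hj; rewrite Hj.
rewrite (eq_bigr (fun b => (bt b * pure R b (a i)) * \prod_(j | j != i) al (a j)));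
  last by move=> b _; rewrite E2 mulrA.
rewrite -mulr_suml /prof_prob (bigD1 i) //= E1 Hbe eqxx; congr (_ * _).
rewrite (bigD1 (a i)) //= /pure ffunE eqxx mulr1 big1 ?addr0 // => b Hb.
by rewrite ffunE eq_sym (negbTE Hb) mulr0.
Qed.

Lemma exp_mix i (be : I -> {ffun B -> R}) (bt al : {ffun B -> R})
    (F : {ffun I -> B} -> R) :
  (forall j, be j = if j == i then bt else al) ->
  \sum_a prof_prob be a * F a =
  \sum_b bt b * \sum_a prof_prob (dev_prof i b al) a * F a.
Proof.
move=> Hbe.
rewrite (eq_bigr (fun a => \sum_b bt b * prof_prob (dev_prof i b al) a * F a));
  last by move=> a _; rewrite (prof_mix i be bt al a Hbe) mulr_suml.
rewrite exchange_big /=; apply: eq_bigr => b _; rewrite mulr_sumr.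
by apply: eq_bigr => a _; rewrite mulrA.
Qed.

Lemma sum2_lin (T1 T2 : finType) (P X : T1 -> T2 -> R) (A c v : R) :
  \sum_t \sum_y P t y * (A + c * (X t y - v)) =
  (A - c * v) * (\sum_t \sum_y P t y) + c * (\sum_t \sum_y X t y * P t y).
Proof.
rewrite [(A - c * v) * _]mulr_sumr [c * (\sum_t _)]mulr_sumr -big_split.
apply: eq_bigr => t _ /=.
rewrite [(A - c * v) * _]mulr_sumr [c * (\sum_y _)]mulr_sumr -big_split.
apply: eq_bigr => y _ /=.
ring.
Qed.

Variables (v : R) (al : S -> {ffun B -> R}) (x : S -> S -> Y -> R) (z d : R).
Variable n : nat.
Hypothesis Hmix : forall s, is_mixed (al s).
Hypothesis Heq : forall s, v = ucom u (al s) s +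
      \sum_(t : S) \sum_(y : Y) x s t y * exp_p p (sym_prof (al s)) s t y.
Hypothesis Hdev : forall s i b, v >= exp_u u i (dev_prof i b (al s)) s +
      \sum_(t : S) \sum_(y : Y) x s t y * exp_p p (dev_prof i b (al s)) s t y.
Hypothesis Hd0 : 0 < d.
Hypothesis Hd1 : d < 1.

Definition sg : pub_strat R S B Y := fun h => al h.2.
Definition Xh (h : hist S Y) := dsum d [seq x q.1.1 q.1.2 q.2 | q <- edges h.1 h.2].
Definition Gh (h : hist S Y) := dsum d (nseq (size h.1) 1).
Definition Phi h := z + (1 - d) * (Xh h - v * Gh h).
Definition wf h := Phi h / d ^+ n.-1.

Lemma Phi_rcons l s y t :
  Phi (rcons l (s, y), t) = Phi (l, s) + (1 - d) * d ^+ size l * (x s t y - v).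
Proof.
rewrite /Phi /Xh /Gh /= edges_rcons map_rcons dsum_rcons size_rcons nseqSr.
rewrite dsum_rcons size_map size_edges size_nseq; ring.
Qed.

Lemma val_eq (i : I) m (h : hist S Y) : (size h.1 + m = n.-1)%N ->
  d ^+ size h.1 * Defs.val p u i (fun _ => sg) wf d m h = Phi h.
Proof.
elim: m h => [|m IH] [l s] /= Hs.
  rewrite addn0 in Hs; rewrite /wf Hs mulrC divfK //.
  by rewrite expf_neq0 // gt_eqF.
set Ph := Phi (l, s).
have E : d ^+ (size l).+1 *
   (\sum_t \sum_y exp_p p (fun=> sg (l, s)) s t y *
       Defs.val p u i (fun=> sg) wf d m (rcons l (s, y), t)) =
   \sum_t \sum_y exp_p p (fun=> sg (l, s)) s t y *
       (Ph + (1 - d) * d ^+ size l * (x s t y - v)).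
  rewrite mulr_sumr; apply: eq_bigr => t _.
  rewrite mulr_sumr; apply: eq_bigr => y _.
  rewrite mulrCA -Phi_rcons -(IH (rcons l (s, y), t)) /= ?size_rcons //.
  by rewrite addSnnS.
rewrite mulrDr mulrA [d ^+ _ * d]mulrC -exprS E sum2_lin exp_p_sum1 //.
have Hv := Heq s; rewrite (ucom_exp _ _ i) in Hv.
rewrite mulr1 /sg /=.
move: Hv; set U := exp_u _ _ _ _; set SX := \sum_t _ => Hv.
rewrite [SX](_ : _ = \sum_t \sum_y x s t y * exp_p p (sym_prof (al s)) s t y) //.
rewrite -/SX Hv; ring.
by move=> j; apply: Hmix.
Qed.


Lemma dev_mixed (i : I) (tau : pub_strat R S B Y) (h : hist S Y) :
  valid_strat tau -> forall j, is_mixed (dev_strat i tau sg j h).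
Proof. by move=> Ht j; rewrite /dev_strat; case: (j == i) => //; apply: Hmix. Qed.

Lemma val_dev (i : I) (tau : pub_strat R S B Y) m (h : hist S Y) :
  valid_strat tau -> (size h.1 + m = n.-1)%N ->
  d ^+ size h.1 * Defs.val p u i (dev_strat i tau sg) wf d m h <= Phi h.
Proof.
move=> Ht.
elim: m h => [|m IH] [l s] /= Hs.
  rewrite addn0 in Hs; rewrite /wf Hs mulrC divfK //.
  by rewrite expf_neq0 // gt_eqF.
set Ph := Phi (l, s).
set be := fun j => dev_strat i tau sg j (l, s).
have Hbe : forall j, be j = if j == i then tau (l, s) else al s.
  by move=> j; rewrite /be /dev_strat; case: (j == i).
have Hm := dev_mixed i tau (l, s) Ht.
have E : d ^+ (size l).+1 *
   (\sum_t \sum_y exp_p p be s t y *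
       Defs.val p u i (dev_strat i tau sg) wf d m (rcons l (s, y), t)) <=
   \sum_t \sum_y exp_p p be s t y *
       (Ph + (1 - d) * d ^+ size l * (x s t y - v)).
  rewrite mulr_sumr; apply: ler_sum => t _.
  rewrite mulr_sumr; apply: ler_sum => y _.
  rewrite mulrCA -Phi_rcons ler_wpM2l //; first exact: exp_p_ge0.
  have := IH (rcons l (s, y), t); rewrite /= size_rcons; apply.
  by rewrite addSnnS.
rewrite sum2_lin exp_p_sum1 // mulr1 in E.
set U := exp_u u i be s.
set SX := \sum_t \sum_y x s t y * exp_p p be s t y.
have HU : U = \sum_b tau (l, s) b * exp_u u i (dev_prof i b (al s)) s.
  by rewrite /U /exp_u (exp_mix _ _ _ _ _ Hbe).
have HSX : SX = \sum_b tau (l, s) b * \sum_t \sum_y x s t y *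
                 exp_p p (dev_prof i b (al s)) s t y.
  rewrite /SX.
  rewrite (eq_bigr (fun t => \sum_b \sum_y tau (l, s) b *
                  (x s t y * exp_p p (dev_prof i b (al s)) s t y))); last first.
    move=> t _; rewrite exchange_big /=; apply: eq_bigr => y _.
    rewrite /exp_p (exp_mix _ _ _ _ _ Hbe) mulr_sumr; apply: eq_bigr => b _.
    by rewrite mulrCA.
  rewrite exchange_big /=; apply: eq_bigr => b _.
  rewrite mulr_sumr; apply: eq_bigr => t _; by rewrite mulr_sumr.
have HUv : U + SX <= v.
  rewrite HU HSX -big_split /=.
  case: (Ht (l, s)) => Ht0 Ht1.
  apply: (@le_trans _ _ (\sum_b tau (l, s) b * v)).
    apply: ler_sum => b _; rewrite -mulrDr ler_wpM2l //; exact: Hdev.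
  by rewrite -mulr_suml Ht1 mul1r.
have Hc : 0 <= (1 - d) * d ^+ size l.
  by apply: mulr_ge0; [rewrite subr_ge0 ltW | rewrite exprn_ge0 // ltW].
have HcU : (1 - d) * d ^+ size l * (U + SX) <= (1 - d) * d ^+ size l * v.
  by rewrite ler_wpM2l.
rewrite mulrDr mulrA [d ^+ _ * d]mulrC -exprS.
apply: le_trans (lerD (lexx _) E) _.
rewrite -/U -/SX.
set c := (1 - d) * d ^+ size l in Hc HcU *.
have -> : d ^+ size l * ((1 - d) * U) = c * U by rewrite /c; ring.
rewrite mulrDr in HcU.
lra.
Qed.

Lemma eq_SSE s : SSE_payoff p u n s wf d z.
Proof.
exists sg; split; last first.
  move=> i; rewrite /payoffG.
  have := val_eq i n.-1 ([::], s); rewrite /= expr0 mul1r => ->; last by [].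
  by rewrite /Phi /Xh /Gh /= !mulr0 subr0 mulr0 addr0.
split; first by move=> h; apply: Hmix.
move=> i tau Ht; rewrite /payoffG.
have := val_eq i n.-1 ([::], s); rewrite /= expr0 mul1r => ->; last by [].
have := val_dev i tau n.-1 ([::], s) Ht; rewrite /= expr0 mul1r.
by apply.
Qed.

End Game.

Lemma part2 (R : realType) (S Y : finType) (lam v z d k eps0 : R)
    (x : S -> S -> Y -> R) (n : nat) (h : hist S Y) :
  (lam = -1 \/ lam = 1) ->
  (forall (T : {set S}) (xi : {perm S}) (psi : S -> Y), perm_on T xi ->
      lam * (\sum_(s in T) x s (xi s) (psi s)) <= 0) ->
  (forall s t y, `|x s t y| <= k) -> 0 <= k ->
  lam * (z - v) < - eps0 -> 0 < eps0 ->
  0 < d -> d < 1 -> (0 < n.-1)%N ->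
  0 < eps0 * ((n%:R - 1) / 2) - 2 * k * #|S|%:R ->
  (n%:R - 1) * (1 - d) / 2 <= 1 - d ^+ n.-1 ->
  size h.1 = n.-1 ->
  lam * wf R S Y v x z d n h < lam * z.
Proof.
move=> Hlam Hcyc Hx Hk Hz He Hd0 Hd1 Hn1 Hn Hgeo Hs.
have HX : lam * Xh R S Y x d h <= k * #|S|%:R.
  rewrite /Xh -dsum_scale; apply: dsum_le.
    by rewrite (ltW Hd0) (ltW Hd1).
  move=> j; rewrite -map_take take_edges big_map.
  have Ha : forall s t y, (fun s t y => lam * x s t y) s t y <= k.
    move=> s t y /=; have /ler_normlP [H1 H2] := Hx s t y.
    by case: Hlam => ->; lra.
  have Hc : forall (T : {set S}) (xi : {perm S}) (psi : S -> Y), perm_on T xi ->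
      \sum_(t in T) (fun s t y => lam * x s t y) t (xi t) (psi t) <= 0.
    by move=> T xi psi Hon; rewrite -mulr_sumr; apply: Hcyc.
  exact: (path_bound _ _ _ _ _ Hk Ha Hc).
have HG : (1 - d) * Gh R S Y d h = 1 - d ^+ n.-1 by rewrite /Gh dsum_geom Hs.
have HD0 : 0 < d ^+ n.-1 by rewrite exprn_gt0.
have HD1 : d ^+ n.-1 < 1 by rewrite exprn_ilt1 ?(ltW Hd0) // -lt0n.
rewrite /wf mulrA ltr_pdivrMr // /Phi.
set X := Xh R S Y x d h in HX *; set G := Gh R S Y d h in HG *; set D := d ^+ n.-1 in HG HD0 HD1 Hgeo *.
set N := n%:R in Hn Hgeo; set K := #|S|%:R in HX Hn.
have HK : 0 <= K by rewrite /K ler0n.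
have E : lam * (z + (1 - d) * (X - v * G)) =
   lam * z * D + ((1 - D) * (lam * (z - v)) + (1 - d) * (lam * X)).
  have FD : D = 1 - (1 - d) * G by rewrite HG; ring.
  rewrite FD; ring.
rewrite E.
have P1 : (1 - d) * (lam * X) <= (1 - d) * (k * K).
  by rewrite ler_wpM2l // subr_ge0 ltW.
have P2 : (1 - D) * (lam * (z - v)) <= (1 - D) * (- eps0).
  by rewrite ler_wpM2l // ?subr_ge0 ?ltW.
have P3 : ((N - 1) * (1 - d) / 2) * eps0 <= (1 - D) * eps0.
  by rewrite ler_wpM2r // ltW.
have P4 : 0 < (1 - d) * (eps0 * ((N - 1) / 2) - 2 * k * K).
  by rewrite mulr_gt0 // subr_gt0.
have P5 : 0 <= k * K by rewrite mulr_ge0.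
have P6 : (1 - d) * (eps0 * ((N - 1) / 2) - 2 * k * K) =
   ((N - 1) * (1 - d) / 2) * eps0 - 2 * ((1 - d) * (k * K)) by ring.
have P7 : (1 - D) * (- eps0) = - ((1 - D) * eps0) by ring.
have P8 : 0 <= (1 - d) * (k * K) by rewrite mulr_ge0 // subr_ge0 ltW.
lra.
Qed.

Lemma kappa_bounds (R : realType) (S Y : finType) (xm xp : S -> S -> Y -> R)
    (vm vp zl zh z : R) :
  zl <= z <= zh ->
  (forall s t y, `|xm s t y| <= kappa0 xm xp vm vp zl zh /\
                 `|xp s t y| <= kappa0 xm xp vm vp zl zh) /\
  `|z - vm| <= kappa0 xm xp vm vp zl zh /\ `|z - vp| <= kappa0 xm xp vm vp zl zh.
Proof.
move=> Hz.
have Hsup : forall v, `|z - v| <= sup [set `|z - v| | z in [set z | zl <= z <= zh]].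
  move=> v; apply: sup_upper_bound; last by exists z.
  split; first by exists `|z - v|, z.
  exists (`|zl - v| + `|zh - v|) => _ [z' /andP [H1 H2] <-].
  have A1 := ler_norm (- (zl - v)); rewrite normrN in A1.
  have A2 := ler_norm (zh - v).
  have A3 := normr_ge0 (zh - v); have A4 := normr_ge0 (zl - v).
  apply/ler_normlP; split; lra.
split; last split.
- move=> s t y; rewrite /kappa0.
  have H : Num.max `|xm s t y| `|xp s t y| <=
    \big[Num.max/0]_(s0 : S) \big[Num.max/0]_(t0 : S) \big[Num.max/0]_(y0 : Y)
        Num.max `|xm s0 t0 y0| `|xp s0 t0 y0|.
    apply: le_trans (le_bigmax _ _ s).
    apply: le_trans (le_bigmax _ _ t).
    exact: (le_bigmax _ (fun y0 => Num.max `|xm s t y0| `|xp s t y0|) y).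
  have Hm : `|xm s t y| <= Num.max `|xm s t y| `|xp s t y| by rewrite le_max lexx.
  have Hq : `|xp s t y| <= Num.max `|xm s t y| `|xp s t y|.
    by rewrite le_max lexx orbT.
  set BM := \big[Num.max/0]_(s0 : S) _ in H *.
  have HB : BM <= Num.max BM (Num.max (sup [set `|z - vm| | z in [set z | zl <= z <= zh]])
             (sup [set `|z - vp| | z in [set z | zl <= z <= zh]])).
    by rewrite le_max lexx.
  by split; apply: le_trans HB; apply: le_trans H.
- by rewrite /kappa0 !le_max Hsup !orbT.
- by rewrite /kappa0 !le_max Hsup !orbT.
Qed.

Lemma main_gen (R : realType) (I S B Y : finType)
    (p : S -> {ffun I -> B} -> S -> Y -> R) (u : I -> {ffun I -> B} -> S -> R)
    (Hp : transition_prob p) (Hsym : symmetric_game p u)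
    (lam v : R) (al : S -> {ffun B -> R}) (x : S -> S -> Y -> R)
    (z d : R) (n : nat) (eps0 k : R) :
  (lam = -1 \/ lam = 1) -> feasible p u lam v al x ->
  lam * (z - v) < - eps0 -> 0 < eps0 ->
  (forall s t y, `|x s t y| <= k) -> `|z - v| <= k ->
  0 < eps0 * ((n%:R - 1) / 2) - 2 * k * #|S|%:R ->
  (n%:R / 2) ^+ 2 * (1 - d) <= #|S|%:R ->
  (n%:R - 1) * (1 - d) / 2 <= 1 - d ^+ n.-1 -> d < 1 ->
  exists w : hist S Y -> R,
    (forall s : S, SSE_payoff p u n s w d z) /\
    (forall h : hist S Y, in_Hn n h -> lam * w h < lam * z).
Proof.
move=> Hlam [Hmix [Heq [Hdev Hcyc]]] Hz He Hx Hzk Hn Hsq Hgeo Hd1.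
case: (pickP (fun _ : S => true)) => [s0 _ | HS]; last first.
  by exists (fun _ => z); split=> [s | h]; [have := HS s | have := HS h.2].
have HK : 1 <= #|S|%:R :> R.
  by rewrite ler1n; apply/card_gt0P; exists s0.
have Hk : eps0 < k.
  have A1 := ler_norm (z - v); have A2 := ler_norm (- (z - v)).
  rewrite normrN in A2; case: Hlam => Hl; rewrite Hl ?mulN1r ?mul1r in Hz.
    have H0 : eps0 < z - v by lra.
    exact: (lt_le_trans H0 (le_trans A1 Hzk)).
  have H0 : eps0 < - (z - v) by lra.
  exact: (lt_le_trans H0 (le_trans A2 Hzk)).
set N := n%:R in Hn Hsq Hgeo; set K := #|S|%:R in HK Hn Hsq.
have H1 : 2 * eps0 * K <= 2 * k * K by rewrite ler_wpM2r ?ler_wpM2l ?ltW //; lra.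
have H2 : 0 < eps0 * ((N - 1) / 2 - 2 * K).
  have -> : eps0 * ((N - 1) / 2 - 2 * K) = eps0 * ((N - 1) / 2) - 2 * eps0 * K by ring.
  lra.
have H3 : 0 < (N - 1) / 2 - 2 * K by rewrite -(pmulr_rgt0 _ He).
have HN : 1 + 4 * K < N by lra.
have Hd0 : 0 < d.
  rewrite ltNge; apply/negP => Hd.
  have : (N / 2) ^+ 2 <= (N / 2) ^+ 2 * (1 - d).
    by rewrite ler_peMr ?exprn_ge0 //; lra.
  rewrite expr2; nra.
have Hn1 : (0 < n.-1)%N.
  have : (1 < n)%N by rewrite -(ltr_nat R) -/N; lra.
  by case: n {N Hn Hsq Hgeo HN H2 H3} => [|[|m]].
exists (wf R S Y v x z d n); split.
  by move=> s; apply: (@eq_SSE _ _ _ _ _ p u Hp Hsym v al x z d n Hmix Heq Hdev Hd0 Hd1 s).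
move=> h Hh; apply: (@part2 _ _ _ lam v z d k eps0 x n h Hlam Hcyc Hx _ Hz He Hd0 Hd1 Hn1 Hn Hgeo Hh).
lra.
Qed.

Theorem mainTheorem3 (R : realType) (I S B Y : finType)
    (p : S -> {ffun I -> B} -> S -> Y -> R) (u : I -> {ffun I -> B} -> S -> R)
    (Hp : transition_prob p) (Hsym : symmetric_game p u)
    (zl zh : R) (Hz : zl < zh)
    (Hkm : (- kSS p u (-1) < zl%:E)%E) (Hkp : (zh%:E < kSS p u 1)%E)
    (eps0 : R) (Heps0 : 0 < eps0)
    (vm vp : R) (alm alp : S -> {ffun B -> R}) (xm xp : S -> S -> Y -> R)
    (Hfm : feasible p u (-1) vm alm xm) (Hfp : feasible p u 1 vp alp xp)
    (Hv : forall z, zl <= z <= zh -> vm + eps0 < z /\ z < vp - eps0)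
    (n : nat)
    (Hn : 0 < eps0 * ((n%:R - 1) / 2) - 2 * kappa0 xm xp vm vp zl zh * #|S|%:R)
    (dbar : R) (Hdbar : dbar < 1)
    (Hd : forall d, dbar <= d < 1 ->
        (n%:R / 2) ^+ 2 * (1 - d) <= #|S|%:R /\
        (n%:R - 1) * (1 - d) / 2 <= 1 - d ^+ n.-1) :
  forall (lam : R), lam = -1 \/ lam = 1 ->
  forall z, zl <= z <= zh ->
  forall d, dbar <= d < 1 ->
  exists w : hist S Y -> R,
    (forall s : S, SSE_payoff p u n s w d z) /\
    (forall h : hist S Y, in_Hn n h -> lam * w h < lam * z).
Proof.
move=> lam Hlam z Hzr d Hdr.
have [Hsq Hgeo] := Hd d Hdr.
have Hd1 : d < 1 by case/andP: Hdr.
have [Hx [Hzm Hzp]] := @kappa_bounds _ _ _ xm xp vm vp zl zh z Hzr.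
have [Hv1 Hv2] := Hv z Hzr.
case: Hlam => Hl; subst lam.
- apply: (@main_gen _ _ _ _ _ p u Hp Hsym _ _ _ _ z d n eps0 _ _ Hfm _ Heps0 _ Hzm Hn Hsq Hgeo Hd1) => //.
  + by left.
  + lra.
  + by move=> s t y; case: (Hx s t y).
- apply: (@main_gen _ _ _ _ _ p u Hp Hsym _ _ _ _ z d n eps0 _ _ Hfp _ Heps0 _ Hzp Hn Hsq Hgeo Hd1) => //.
  + by right.
  + lra.
  + by move=> s t y; case: (Hx s t y).
Qed.
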